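(* Let $\ell$ be an odd prime. Then every $\underline{\mathbb Z/\ell}$-module is a direct sum of copies of $H$ and $S_\Theta$. Moreover, every $\underline{\mathbb Z/\ell}$-module is projective and every short exact sequence of $\underline{\mathbb Z/\ell}$-modules splits.
   Context: A $C_2$-Mackey functor $M$ consists of abelian groups $M_\Theta,M_\bullet$ with homomorphisms $t\colon M_\Theta\to M_\Theta$, $p^*\colon M_\bullet\to M_\Theta$, $p_*\colon M_\Theta\to M_\bullet$ satisfying $tp^*=p^*$, $p_*t=p_*$, $t^2=1$, $p^*p_*=1+t$. A $\underline{\mathbb Z/\ell}$-module (module over the constant Mackey ring $\underline{\mathbb Z/\ell}$) is exactly a Mackey functor with $\ell M_\Theta=0$, $\ell M_\bullet=0$ and $p_*p^*=2$. Here $H=\underline{\mathbb Z/\ell}$ is the module with $H_\Theta=H_\bullet=\mathbb Z/\ell$, $p^*=t=\mathrm{id}$, $p_*=2$, and $S_\Theta$ is the module with $(S_\Theta)_\Theta=\mathbb Z/\ell$, $t=-1$, and $(S_\Theta)_\bullet=0$. *)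

(* Defs.v *)
From mathcomp Require Import all_boot all_order all_algebra.
Set Implicit Arguments. Unset Strict Implicit. Unset Printing Implicit Defensive.
Import GRing.Theory.
Local Open Scope ring_scope.

(* A C2-Mackey functor: abelian groups M_Theta (MT), M_bullet (MB) with
   additive maps t : MT -> MT, p^* : MB -> MT (pu), p_* : MT -> MB (pl). *)
Record mackey := Mackey {
  MT : zmodType;
  MB : zmodType;
  mt : MT -> MT;
  pu : MB -> MT;
  pl : MT -> MB;
  mt_add : forall x y, mt (x + y) = mt x + mt y;
  pu_add : forall x y, pu (x + y) = pu x + pu y;
  pl_add : forall x y, pl (x + y) = pl x + pl y;
  mt_pu : forall y, mt (pu y) = pu y;
  pl_mt : forall x, pl (mt x) = pl x;
  mt_invol : forall x, mt (mt x) = x;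
  pu_pl : forall x, pu (pl x) = x + mt x
}.

Record mor (M N : mackey) := Mor {
  morT : MT M -> MT N;
  morB : MB M -> MB N;
  morT_add : forall x y, morT (x + y) = morT x + morT y;
  morB_add : forall x y, morB (x + y) = morB x + morB y;
  morT_mt : forall x, morT (mt x) = mt (morT x);
  morT_pu : forall y, morT (pu y) = pu (morB y);
  morB_pl : forall x, morB (pl x) = pl (morT x)
}.

Definition is_Zl_module (l : nat) (M : mackey) : Prop :=
  [/\ forall x : MT M, x *+ l = 0,
      forall y : MB M, y *+ l = 0 &
      forall y : MB M, pl (pu y) = y *+ 2].

Section HS.
Variable l : nat.

Definition H_mackey : mackey.
Proof.
refine (@Mackey 'Z_l 'Z_l id id (fun x => x *+ 2) _ _ _ _ _ _ _);
  by [ | move=> x y; rewrite mulrnDl | move=> x; rewrite mulr2n].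
Defined.

Definition S_mackey : mackey.
Proof.
refine (@Mackey 'Z_l 'I_1 (fun x => - x) (fun _ => 0) (fun _ => 0)
          _ _ _ _ _ _ _);
  by [ | move=> x y; rewrite opprD | move=> y; rewrite oppr0
       | move=> x y; rewrite addr0 | move=> x; rewrite opprK
       | move=> x; rewrite subrr].
Defined.
End HS.

Definition finsupp (I : eqType) (V : zmodType) (a : I -> V) (s : seq I) :=
  uniq s /\ forall i, a i != 0 -> i \in s.

(* M is the (internal) direct sum of the images of the families
   f_i : H -> M (i in I) and g_j : S_Theta -> M (j in J), i.e. the induced
   map from the external direct sum (finitely supported families) is a
   bijection at both levels. *)
Definition is_dsum_H_S (l : nat) (M : mackey) (I J : eqType)
    (f : I -> mor (H_mackey l) M) (g : J -> mor (S_mackey l) M) : Prop :=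
  [/\ (forall x : MT M, exists (a : I -> 'Z_l) (s : seq I) (b : J -> 'Z_l) (r : seq J),
         [/\ finsupp a s, finsupp b r &
             x = \sum_(i <- s) morT (f i) (a i) + \sum_(j <- r) morT (g j) (b j)]),
      (forall (a : I -> 'Z_l) (s : seq I) (b : J -> 'Z_l) (r : seq J),
         finsupp a s -> finsupp b r ->
         \sum_(i <- s) morT (f i) (a i) + \sum_(j <- r) morT (g j) (b j) = 0 ->
         (forall i, a i = 0) /\ (forall j, b j = 0)),
      (* level bullet: surjective ((S_Theta)_bullet = 0) *)
      (forall y : MB M, exists (a : I -> 'Z_l) (s : seq I),
         finsupp a s /\ y = \sum_(i <- s) morB (f i) (a i)) &
      (forall (a : I -> 'Z_l) (s : seq I),
         finsupp a s -> \sum_(i <- s) morB (f i) (a i) = 0 -> forall i, a i = 0)].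

Definition mor_surj (A B : mackey) (e : mor A B) : Prop :=
  (forall y : MT B, exists x, morT e x = y) /\ (forall y : MB B, exists x, morB e x = y).

Definition mor_inj (A B : mackey) (e : mor A B) : Prop :=
  (forall x y, morT e x = morT e y -> x = y) /\ (forall x y, morB e x = morB e y -> x = y).

Definition is_projective (l : nat) (P : mackey) : Prop :=
  forall (A B : mackey), is_Zl_module l A -> is_Zl_module l B ->
  forall (e : mor A B) (f : mor P B), mor_surj e ->
  exists g : mor P A,
    (forall x, morT e (morT g x) = morT f x) /\ (forall y, morB e (morB g y) = morB f y).

Definition short_exact (A B C : mackey) (i : mor A B) (p : mor B C) : Prop :=
  [/\ mor_inj i, mor_surj p,
      (forall b : MT B, morT p b = 0 <-> exists a, morT i a = b) &
      (forall b : MB B, morB p b = 0 <-> exists a, morB i a = b)].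

Definition ses_splits (A B C : mackey) (i : mor A B) (p : mor B C) : Prop :=
  exists s : mor C B,
    (forall c, morT p (morT s c) = c) /\ (forall c, morB p (morB s c) = c).

(* Main.v *)
Require Import Defs.
From mathcomp Require Import all_boot all_order all_algebra.
From mathcomp Require Import boolp classical_sets.
From Stdlib Require Import ClassicalEpsilon.
Set Implicit Arguments. Unset Strict Implicit. Unset Printing Implicit Defensive.
Import GRing.Theory.
Local Open Scope ring_scope.

Section Additive.
Variables (U1 U2 : zmodType) (f : U1 -> U2) (fD : forall x y, f (x + y) = f x + f y).
Lemma af0 : f 0 = 0.
Proof. by have := fD 0 0; rewrite addr0 -{1}[f 0]addr0 => /addrI <-. Qed.
Lemma afN x : f (- x) = - f x.
Proof. by apply/eqP; rewrite -addr_eq0 -fD addNr af0. Qed.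
Lemma afB x y : f (x - y) = f x - f y.
Proof. by rewrite fD afN. Qed.
Lemma afMn x n : f (x *+ n) = f x *+ n.
Proof. by elim: n => [|n IH]; rewrite ?mulr0n ?af0 // !mulrS fD IH. Qed.
Lemma af_sum (I : Type) (s : seq I) (G : I -> U1) :
  f (\sum_(i <- s) G i) = \sum_(i <- s) f (G i).
Proof. exact: (big_morph f fD af0). Qed.
End Additive.

Definition tors (V : zmodType) (l : nat) := forall v : V, v *+ l = 0.

Lemma mulrn_modl (V : zmodType) l (T : tors V l) (v : V) n : v *+ (n %% l) = v *+ n.
Proof. by rewrite {2}(divn_eq n l) mulrnDr mulrnA T add0r. Qed.

Lemma mulrn_eqmod (V : zmodType) l (T : tors V l) (v : V) n m :
  n = m %[mod l] -> v *+ n = v *+ m.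
Proof. by move=> e; rewrite -(mulrn_modl T) e mulrn_modl. Qed.

Section LC.
Variables (V : eqType) (U : zmodType).
Definition lcF (F : V -> U) (s : seq V) (c : V -> nat) := \sum_(x <- s) F x *+ c x.
Definition coef (s : seq V) (c : V -> nat) x := if x \in s then c x else 0%N.

Lemma lcF_sub F s u c : uniq s -> uniq u -> {subset s <= u} ->
  lcF F s c = lcF F u (coef s c).
Proof.
move=> us uu su; rewrite /lcF /coef.
transitivity (\sum_(x <- u | x \in s) F x *+ c x).
  rewrite -[RHS]big_filter; apply: perm_big; apply: uniq_perm => //.
    exact: filter_uniq.
  move=> x; rewrite mem_filter; case xs: (x \in s) => //=; by rewrite su.
rewrite big_mkcond; apply: eq_bigr => x _; by case: (x \in s); rewrite ?mulr0n.
Qed.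

Lemma lcF_add F u c d : lcF F u (fun x => c x + d x)%N = lcF F u c + lcF F u d.
Proof. by rewrite /lcF -big_split; apply: eq_bigr => x _; rewrite mulrnDr. Qed.

Lemma lcF_eqmod l (T : tors U l) F u c d : (forall x, x \in u -> c x = d x %[mod l]) ->
  lcF F u c = lcF F u d.
Proof. by move=> e; apply: eq_big_seq => x /e; apply: mulrn_eqmod. Qed.

Lemma lcF_nil F c : lcF F [::] c = 0.
Proof. by rewrite /lcF big_nil. Qed.
End LC.

Lemma lcF_morph (V : eqType) (U1 U2 : zmodType) (g : U1 -> U2)
  (gD : forall x y, g (x + y) = g x + g y) (F : V -> U1) s c :
  g (lcF F s c) = lcF (fun x => g (F x)) s c.
Proof. by rewrite /lcF (af_sum gD); apply: eq_bigr => x _; rewrite (afMn gD). Qed.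



Section Basis.
Variables (V : zmodType) (l : nat) (hl : prime l) (T : tors V l).

Definition lc := lcF (@id V).
Definition indep (B : set V) := forall s c, uniq s -> (forall x, x \in s -> B x) ->
  lc s c = 0 -> forall x, x \in s -> (l %| c x)%N.
Definition spanB (B : set V) v := exists s c,
  [/\ uniq s, (forall x, x \in s -> B x) & v = lc s c].

Lemma chain_list (F : set (set V)) : total_on F subset ->
  forall s : seq V, (forall x, x \in s -> (\bigcup_(X in F) X)%classic x) ->
  s = [::] \/ exists X, F X /\ forall x, x \in s -> X x.
Proof.
move=> tot; elim=> [|a s IH] sU; first by left.
right; have [X FX Xa] := sU a (mem_head _ _).
have [->|[Y [FY sY]]] := IH (fun x xs => sU x (mem_behead (s := a :: s) xs)).
  by exists X; split=> // x; rewrite mem_seq1 => /eqP->.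
have [XY|YX] := tot X Y FX FY.
  exists Y; split=> // x; rewrite inE => /orP[/eqP->|]; [exact: XY | exact: sY].
exists X; split=> // x; rewrite inE => /orP[/eqP->//|/sY]; exact: YX.
Qed.

Lemma in_span_self (B : set V) v : B v -> spanB B v.
Proof.
move=> Bv; exists [:: v], (fun _ => 1%N); split => //.
  by move=> x; rewrite mem_seq1 => /eqP->.
by rewrite /lc /lcF big_seq1 mulr1n.
Qed.

Lemma indep_ext (B : set V) v : indep B -> ~ spanB B v ->
  indep (fun x => B x \/ x = v).
Proof.
move=> iB nv s c us sBv s0.
case vs: (v \in s); last first.
  apply: iB => // x xs; case: (sBv x xs) => // xv.
  by move: xs; rewrite xv vs.
pose s' := rem v s.
have us' : uniq s' by exact: rem_uniq.
have ms' x : (x \in s') = (x != v) && (x \in s) by rewrite (mem_rem_uniq _ us) inE.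
have s'B x : x \in s' -> B x.
  rewrite ms' => /andP[xv xs]; case: (sBv x xs) => // /eqP; by rewrite (negbTE xv).
have E : v *+ c v + lc s' c = 0.
  by rewrite -s0 /lc /lcF (perm_big _ (perm_to_rem vs)) big_cons.
case dv: (l %| c v)%N.
  have v0 : v *+ c v = 0 by rewrite -(divnK dv) mulrnA T.
  rewrite v0 add0r in E.
  move=> x xs; case xv: (x == v); first by rewrite (eqP xv).
  by apply: (iB s' c us' s'B E); rewrite ms' xv.
exfalso; apply: nv.
have lgt0 : (0 < l)%N by exact: prime_gt0.
have [a _ da] := Bezoutl (c v) lgt0.
have g1 : gcdn l (c v) = 1%N by apply/eqP; rewrite -/(coprime _ _) prime_coprime // dv.
rewrite g1 in da.
have v1 : v + v *+ (c v * a) = 0 by rewrite -mulrS -add1n mulnC -(divnK da) mulrnA T.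
exists s', (fun x => c x * a)%N; split => //.
have E2 : v *+ (c v * a) + lc s' (fun x => c x * a)%N = 0.
  rewrite -(mul0rn _ a) -E mulrnDl mulrnA; congr (_ + _).
  by rewrite /lc /lcF -sumrMnl; apply: eq_bigr => x _; rewrite mulrnA.
have e1 : v = - (v *+ (c v * a)) by apply/eqP; rewrite -addr_eq0 v1.
have e2 : v *+ (c v * a) = - lc s' (fun x => c x * a)%N.
  by apply/eqP; rewrite -addr_eq0 E2.
by rewrite {1}e1 e2 opprK.
Qed.

Lemma basis_ex (P : V -> Prop) : exists B : set V,
  [/\ (forall x, B x -> P x), indep B & forall v, P v -> spanB B v].
Proof.
case: (@Zorn_bigcup V (fun B : set V => (forall x, B x -> P x) /\ indep B)).
  move=> F FP tot; split.
    by move=> x [X FX Xx]; exact: (FP X FX).1 x Xx.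
  move=> s c us sU.
  have [->|[X [FX sX]]] := chain_list tot sU; first by [].
  exact: (FP X FX).2 s c us sX.
move=> B [[BP iB] maxB].
exists B; split=> // v Pv.
case: (classic (spanB B v)) => // nv; exfalso.
apply: (maxB (fun x => B x \/ x = v)).
  split; first by move=> x Bx; left.
  by move=> sub; exact: nv (in_span_self (sub v (or_intror erefl))).
split; last exact: indep_ext.
by move=> x [/BP //|->].
Qed.
End Basis.



Lemma cong_lemma l a b : (0 < l)%N -> (l %| a + l.-1 * b)%N -> a = b %[mod l].
Proof.
move=> l0 /eqP d.
have e : (a + l.-1 * b + b = b * l + a)%N.
  by rewrite -addnA (addnC (l.-1 * b) b) -mulSn prednK // mulnC addnC.
by rewrite -(modnMDl b a) -e -modnDml d add0n.
Qed.

Lemma lc_neg (V : zmodType) l (T : tors V l) (s : seq V) (c : V -> nat) :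
  (0 < l)%N -> lc s (fun x => l.-1 * c x)%N = - lc s c.
Proof.
move=> l0; apply/eqP; rewrite -addr_eq0 /lc -lcF_add /lcF big1_seq // => x _.
by rewrite addnC -mulSn prednK // mulnC mulrnA T.
Qed.

Section Ext.
Variables (V U : zmodType) (l : nat) (hl : prime l) (TV : tors V l) (TU : tors U l).
Variables (B : set V) (iB : indep l B) (phi : V -> U).

Lemma rep_unique s c s' c' : uniq s -> uniq s' -> (forall x, x \in s -> B x) ->
  (forall x, x \in s' -> B x) -> lc s c = lc s' c' -> lcF phi s c = lcF phi s' c'.
Proof.
move=> us us' sB s'B E.
have l0 : (0 < l)%N by exact: prime_gt0.
set u := undup (s ++ s').
have uu : uniq u by exact: undup_uniq.
have su : {subset s <= u} by move=> x xs; rewrite mem_undup mem_cat xs.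
have s'u : {subset s' <= u} by move=> x xs; rewrite mem_undup mem_cat xs orbT.
have uB x : x \in u -> B x by rewrite mem_undup mem_cat => /orP[/sB|/s'B].
rewrite /lc in E.
rewrite (lcF_sub _ _ us uu su) (lcF_sub _ _ us' uu s'u) in E.
rewrite (lcF_sub _ _ us uu su) (lcF_sub _ _ us' uu s'u).
apply: (lcF_eqmod TU) => x xu; apply: cong_lemma => //.
have := @iB u (fun x => coef s c x + l.-1 * coef s' c' x)%N uu uB; apply => //.
have := @lc_neg V l TV u (coef s' c') l0; rewrite /lc => N.
by rewrite lcF_add N E subrr.
Qed.

Lemma ext_ex : exists Phi : V -> U, forall s c, uniq s -> (forall x, x \in s -> B x) ->
  Phi (lc s c) = lcF phi s c.
Proof.
have: forall v, exists r : U, forall s c, uniq s -> (forall x, x \in s -> B x) ->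
    v = lc s c -> r = lcF phi s c.
  move=> v; case: (classic (spanB B v)) => [[s [c [us sB ->]]]|nv].
    by exists (lcF phi s c) => s' c' us' s'B e; exact: rep_unique.
  by exists 0 => s c us sB e; exfalso; apply: nv; exists s, c.
case/choice => Phi HPhi; exists Phi => s c us sB; exact: HPhi.
Qed.

Lemma ext_add (Phi : V -> U) : (forall s c, uniq s -> (forall x, x \in s -> B x) ->
  Phi (lc s c) = lcF phi s c) ->
  forall v w, spanB B v -> spanB B w -> Phi (v + w) = Phi v + Phi w.
Proof.
move=> HP v w [s [c [us sB ->]]] [s' [c' [us' s'B ->]]].
set u := undup (s ++ s').
have uu : uniq u by exact: undup_uniq.
have su : {subset s <= u} by move=> x xs; rewrite mem_undup mem_cat xs.
have s'u : {subset s' <= u} by move=> x xs; rewrite mem_undup mem_cat xs orbT.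
have uB x : x \in u -> B x by rewrite mem_undup mem_cat => /orP[/sB|/s'B].
rewrite /lc (lcF_sub _ _ us uu su) (lcF_sub _ _ us' uu s'u) -lcF_add -!/(lc _ _) !HP //.
by rewrite lcF_add -(lcF_sub _ _ us uu su) -(lcF_sub _ _ us' uu s'u).
Qed.
End Ext.



Section Transfer.
Variables (V : zmodType) (l : nat) (hZ : (Zp_trunc l).+2 = l) (TV : tors V l) (B : set V).
Definition Ity := {x : V | `[< B x >]}.

Lemma T1 s c : uniq s -> (forall x, x \in s -> B x) ->
  exists (a : Ity -> 'Z_l) (s' : seq Ity),
    finsupp a s' /\ lc s c = \sum_(i <- s') val i *+ a i.
Proof.
move=> us sB.
exists (fun i => inZp (coef s c (val i))), (pmap insub s); split.
  split; first exact: pmap_sub_uniq.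
  move=> i; rewrite mem_pmap_sub; apply: contraR => ni.
  by apply/eqP/val_inj; rewrite /= /coef (negbTE ni) mod0n.
transitivity (\sum_(x <- map val (pmap insub s : seq Ity)) x *+ (coef s c x %% (Zp_trunc l).+2)).
  rewrite (pmap_filter (@insubK _ _ Ity)).
  have -> : [seq x <- s | insub x : option Ity] = s.
    apply/all_filterP/allP => x xs /=.
    by case: insubP => // /negP []; exact/asboolP/sB.
  rewrite /lc /lcF; apply: eq_big_seq => x xs.
  by rewrite /coef xs hZ (mulrn_modl TV).
by rewrite big_map.
Qed.

Lemma T2 (a : Ity -> 'Z_l) s' : finsupp a s' ->
  exists s c, [/\ uniq s, (forall x, x \in s -> B x),
    \sum_(i <- s') val i *+ a i = lc s c &
    ((forall x, x \in s -> (l %| c x)%N) -> forall i, a i = 0)].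
Proof.
move=> [us' fs].
exists (map val s'), (fun x => if insub x is Some i then nat_of_ord (a i) else 0%N).
split.
- by rewrite map_inj_uniq //; exact: val_inj.
- by move=> x /mapP [i _ ->]; exact/asboolP/(valP i).
- by rewrite /lc /lcF big_map; apply: eq_bigr => i _; rewrite valK.
move=> H i; case: (boolP (i \in s')) => iS; last first.
  by apply/eqP; apply/negPn/negP => /fs; rewrite (negbTE iS).
have := H (val i) (map_f val iS); rewrite valK => d.
apply/val_inj => /=.
have lt : (a i < l)%N by rewrite -{2}hZ; exact: ltn_ord.
by move: d; rewrite /dvdn modn_small // => /eqP.
Qed.
Lemma Ity_prop (j : Ity) : B (val j).
Proof. exact/asboolP/(valP j). Qed.
End Transfer.



Section Mk.
Variables (l : nat) (hl : prime l) (hodd : odd l).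
Let hZ : (Zp_trunc l).+2 = l := Zp_cast (prime_gt1 hl).
Definition hh := l.+1./2.
Lemma hh2 : (2 * hh = l.+1)%N.
Proof.
have := odd_double_half l.+1; rewrite /= hodd /= add0n => e.
by rewrite /hh mulnC muln2.
Qed.

Lemma half_inv (U : zmodType) (T : tors U l) (u : U) : u *+ 2 *+ hh = u.
Proof. by rewrite -mulrnA hh2 mulrS T addr0. Qed.
Lemma half_inv' (U : zmodType) (T : tors U l) (u : U) : u *+ hh *+ 2 = u.
Proof. by rewrite -mulrnA mulnC hh2 mulrS T addr0. Qed.
Lemma two0 (U : zmodType) (T : tors U l) (u : U) : u *+ 2 = 0 -> u = 0.
Proof. by move=> e; rewrite -(half_inv T u) e mul0rn. Qed.

Lemma valZD (a b : 'Z_l) : nat_of_ord (a + b) = ((a + b) %% l)%N.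
Proof. exact: (f_equal (fun m => ((a + b) %% m)%N) hZ). Qed.

Lemma mulrnZD (U : zmodType) (T : tors U l) (u : U) (a b : 'Z_l) :
  u *+ (a + b)%R = u *+ a + u *+ b.
Proof. by rewrite valZD (mulrn_modl T) mulrnDr. Qed.

Lemma mulrnZN (U : zmodType) (T : tors U l) (u : U) (a : 'Z_l) :
  u *+ (- a)%R = - (u *+ a).
Proof. apply/eqP; rewrite -addr_eq0 -mulrnZD // addNr; apply/eqP; exact: mulr0n. Qed.

Lemma mulrnZ2 (U : zmodType) (T : tors U l) (u : U) (k : 'Z_l) :
  u *+ (k *+ 2)%R = u *+ k *+ 2.
Proof. have -> : k *+ 2 = k + k by rewrite mulr2n.
by rewrite mulrnZD // mulr2n. Qed.

Section M.
Variables (M : mackey) (hM : is_Zl_module l M).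
Let TT : tors (MT M) l := let: And3 a _ _ := hM in a.
Let TB : tors (MB M) l := let: And3 _ a _ := hM in a.
Let plpu : forall y, pl (pu y) = y *+ 2 := let: And3 _ _ a := hM in a.

Definition Wp (x : MT M) := mt x = - x.

Lemma plW x : Wp x -> pl x = 0.
Proof.
move=> wx; apply: (two0 TB); rewrite mulr2n.
have e : pl x = - pl x by rewrite -[pl x in LHS](@pl_mt M) wx (afN (@pl_add M)).
by rewrite {1}e addNr.
Qed.

Definition wW (x : MT M) := (x - mt x) *+ hh.
Lemma wW_W x : Wp (wW x).
Proof.
by rewrite /Wp /wW (afMn (@mt_add M)) (afB (@mt_add M)) mt_invol -mulNrn opprB.
Qed.
Lemma decomp x : x = pu (pl x *+ hh) + wW x.
Proof.
rewrite (afMn (@pu_add M)) pu_pl /wW -mulrnDl addrACA subrr addr0 -mulr2n.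
by rewrite half_inv.
Qed.
Lemma wW_add x y : wW (x + y) = wW x + wW y.
Proof. by rewrite /wW -mulrnDl (mt_add) opprD addrACA. Qed.

Definition Hmor (y : MB M) : mor (H_mackey l) M.
refine (@Mor (H_mackey l) M (fun k : 'Z_l => pu y *+ k) (fun k : 'Z_l => y *+ k)
  _ _ _ _ _) => /=.
- by move=> a b; rewrite mulrnZD.
- by move=> a b; rewrite mulrnZD.
- by move=> k; rewrite (afMn (@mt_add M)) mt_pu.
- by move=> k; rewrite (afMn (@pu_add M)).
- by move=> k; rewrite mulrnZ2 // (afMn (@pl_add M)) plpu -!mulrnA mulnC.
Defined.

Definition Smor (x : MT M) (hx : Wp x) : mor (S_mackey l) M.
refine (@Mor (S_mackey l) M (fun k : 'Z_l => x *+ k) (fun _ => 0)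
  _ _ _ _ _) => /=.
- by move=> a b; rewrite mulrnZD.
- by move=> a b; rewrite addr0.
- by move=> k; rewrite mulrnZN // (afMn (@mt_add M)) hx mulNrn.
- by move=> k; rewrite mulr0n (af0 (@pu_add M)).
- by move=> k; rewrite (afMn (@pl_add M)) plW // mul0rn.
Defined.



Lemma part1 : exists (I J : eqType) (f : I -> mor (H_mackey l) M)
  (g : J -> mor (S_mackey l) M), is_dsum_H_S f g.
Proof.
have [BB [_ iBB spB]] := basis_ex hl TB (fun _ => True).
have [BW [BWW iBW spW]] := basis_ex hl TT Wp.
exists (Ity BB), (Ity BW), (fun i => Hmor (val i)),
  (fun j => Smor (BWW _ (Ity_prop j))).
split.
- move=> x.
  have [s [c [us sB e1]]] := spB (pl x *+ hh) I.
  have [r [d [ur rB e2]]] := spW _ (wW_W x).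
have [a [s' [fa ea]]] := T1 hZ TB c us sB.
  have [b [r' [fb eb]]] := T1 hZ TT d ur rB.
  exists a, s', b, r'; split => //=.
  rewrite {1}(decomp x) e1 e2 ea eb (af_sum (@pu_add M)); congr (_ + _).
  by apply: eq_bigr => i _; rewrite (afMn (@pu_add M)).
- move=> a s' b r' fa fb /= E.
  set X := \sum_(i <- s') _ in E; set Y := \sum_(j <- r') _ in E.
  have mX : mt X = X.
    rewrite /X (af_sum (@mt_add M)); apply: eq_bigr => i _.
    by rewrite (afMn (@mt_add M)) mt_pu.
  have mY : mt Y = - Y.
    rewrite /Y (af_sum (@mt_add M)) -sumrN; apply: eq_bigr => j _.
    by rewrite (afMn (@mt_add M)) (BWW _ (Ity_prop j)) mulNrn.
  have E' : X - Y = 0.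
    by rewrite -mY -[X in X + _]mX -(@mt_add M) E (af0 (@mt_add M)).
  have Y0 : Y = 0.
    apply: (two0 TT); rewrite mulr2n.
    by have := E; rewrite -{1}(subrK Y X) E' add0r.
  rewrite Y0 addr0 in E.
  have [s [c [us sB es hs]]] := T2 hZ fa.
  have [r [d [ur rB er hr]]] := T2 hZ fb.
  split.
    apply: hs; apply: (@iBB s c us sB).
    rewrite -es; apply: (two0 TB); rewrite -plpu (af_sum (@pu_add M)).
    have -> : \sum_(i <- s') pu (val i *+ a i) = X.
      by apply: eq_bigr => i _; rewrite (afMn (@pu_add M)).
    by rewrite E (af0 (@pl_add M)).
  by apply: hr; apply: (@iBW r d ur rB); rewrite -er.
- move=> y.
  have [s [c [us sB e1]]] := spB y I.
have [a [s' [fa ea]]] := T1 hZ TB c us sB.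
  by exists a, s'; split => //; rewrite e1 ea.
- move=> a s' fa /= E.
  have [s [c [us sB es hs]]] := T2 hZ fa.
  by apply: hs; apply: (@iBB s c us sB); rewrite -es.
Qed.

End M.

Lemma part2 (P : mackey) (hP : is_Zl_module l P) : is_projective l P.
Proof.
move=> A B hA hB e f [sT sB'].
have [TTP TBP plpuP] := hP.
have [TTA TBA plpuA] := hA.
have [TTB TBB plpuB] := hB.
have [BB [_ iBB spB]] := basis_ex hl TBP (fun _ => True).
have [BW [BWW iBW spW]] := basis_ex hl TTP (@Wp P).
have [phiB HphiB] := choice (fun (y : MB P) (z : MB A) => morB e z = morB f y)
  (fun y => sB' (morB f y)).
have [phi0 Hphi0] := choice (fun (x : MT P) (z : MT A) => morT e z = morT f x)
  (fun x => sT (morT f x)).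
pose phiW x := wW (phi0 x).
have phiWW x : @Wp A (phiW x) by exact: wW_W.
have ephiW x : @Wp P x -> morT e (phiW x) = morT f x.
  move=> wx; rewrite /phiW /wW (afMn (morT_add e)) (afB (morT_add e)) morT_mt Hphi0.
  by rewrite -(morT_mt f) wx (afN (morT_add f)) opprK -mulr2n half_inv.
have [PhiB HPB] := ext_ex hl TBP TBA iBB phiB.
have [PhiW HPW] := ext_ex hl TTP TTA iBW phiW.
have PBadd v w : PhiB (v + w) = PhiB v + PhiB w.
  exact: (ext_add HPB (spB v I) (spB w I)).
have PWadd v w : @Wp P v -> @Wp P w -> PhiW (v + w) = PhiW v + PhiW w.
  by move=> hv hw; exact: (ext_add HPW (spW v hv) (spW w hw)).
have PW0 : PhiW 0 = 0.
  have h0 : forall x : MT P, x \in [::] -> BW x by [].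
  have := HPW [::] (fun _ => 0%N) isT h0.
  by rewrite /lc !lcF_nil.
have WN v : @Wp P v -> @Wp P (- v).
  by rewrite /Wp => hv; rewrite (afN (@mt_add P)) hv.
have PWN v : @Wp P v -> PhiW (- v) = - PhiW v.
  move=> hv; apply/eqP; rewrite -addr_eq0 -PWadd; [by rewrite addNr PW0 | exact: WN | exact: hv].
have PWW v : @Wp P v -> @Wp A (PhiW v).
  move=> hv; have [r [d [ur rB ->]]] := spW v hv.
  rewrite /Wp HPW // (lcF_morph (@mt_add A)).
  transitivity (lcF (fun x => - phiW x) r d).
    by rewrite /lcF; apply: eq_bigr => x _; rewrite phiWW.
  by rewrite -(lcF_morph (fun x y => opprD x y)).
have eB y : morB e (PhiB y) = morB f y.
  have [s [c [us sB ->]]] := spB y I.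
  rewrite HPB // (lcF_morph (morB_add e)) /lc (lcF_morph (morB_add f)) /lcF.
  by apply: eq_bigr => x _; rewrite HphiB.
have eW w : @Wp P w -> morT e (PhiW w) = morT f w.
  move=> hw; have [r [d [ur rB ->]]] := spW w hw.
  rewrite HPW // (lcF_morph (morT_add e)) /lc (lcF_morph (morT_add f)) /lcF.
  by apply: eq_big_seq => x xr; rewrite ephiW //; apply: BWW; apply: rB.
pose gT x := pu (PhiB (pl x *+ hh)) + PhiW (wW x).
have gT_add x y : gT (x + y) = gT x + gT y.
  rewrite /gT (@pl_add P) mulrnDl PBadd (@pu_add A) wW_add PWadd.
  - by rewrite addrACA.
  - exact: wW_W.
  - exact: wW_W.
have gT_mt x : gT (mt x) = mt (gT x).
  rewrite /gT; have -> : wW (mt x) = - wW x by rewrite /wW mt_invol -mulNrn opprB.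
  rewrite pl_mt PWN; last exact: wW_W.
  rewrite (@mt_add A) mt_pu.
  by have := PWW _ (wW_W x); rewrite /Wp => ->.
have gT_pu y : gT (pu y) = pu (PhiB y).
  rewrite /gT; have -> : wW (pu y) = 0 by rewrite /wW mt_pu subrr mul0rn.
  by rewrite plpuP half_inv // PW0 addr0.
have gB_pl x : PhiB (pl x) = pl (gT x).
  rewrite /gT (@pl_add A) plpuA (plW hA (PWW _ (wW_W x))) addr0.
  by rewrite -(afMn PBadd) half_inv'.
exists (@Mor P A gT PhiB gT_add PBadd gT_mt gT_pu gB_pl); split => /=.
  move=> x; rewrite /gT (morT_add e) (morT_pu e) eB eW.
  by rewrite -(morT_pu f) -(morT_add f) -decomp.
  exact: wW_W.
exact: eB.
Qed.

End Mk.


Definition idmor (C : mackey) : mor C C :=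
  @Mor C C id id (fun _ _ => erefl) (fun _ _ => erefl) (fun _ => erefl)
    (fun _ => erefl) (fun _ => erefl).

Local Close Scope ring_scope.

Theorem proposition3p5 (l : nat) (hl : prime l) (hodd : odd l) :
  (forall M : mackey, is_Zl_module l M ->
     exists (I J : eqType) (f : I -> mor (H_mackey l) M) (g : J -> mor (S_mackey l) M),
       is_dsum_H_S f g)
  /\ (forall M : mackey, is_Zl_module l M -> is_projective l M)
  /\ (forall (A B C : mackey) (i : mor A B) (p : mor B C),
        is_Zl_module l A -> is_Zl_module l B -> is_Zl_module l C ->
        short_exact i p -> ses_splits i p).
Proof.
split. move=> M hM. exact (part1 hl hodd hM).
split. move=> M hM. exact (part2 hl hodd hM).
move=> A B C i p hA hB hC [_ sp _ _].
have [g [gT gB]] := part2 hl hodd hC hB hC (idmor C) sp.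
by exists g.
Qed.
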